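(* Let $L$ be a Leibniz algebra over $F$, $(l,r,V)$ a representation of $L$, $A$ a subspace of $L$ and $x\in n_L(A)$. Then for all integers $k,p\ge 0$: $$\big((r_A)^p r_x^k\big)\circ r_A\subseteq (r_A)^{p+1}r_x^k+\cdots+(r_A)^{p+1}r_x+(r_A)^{p+1}.$$
   Context: $F$ is an algebraically closed field of characteristic zero; all spaces are finite-dimensional. A (right) Leibniz algebra is a vector space $L$ with bilinear bracket satisfying $[x,[y,z]]=[[x,y],z]-[[x,z],y]$. A representation $(l,r,V)$ of $L$ is a vector space $V$ with linear maps $l,r:L\to\mathrm{End}_F(V)$ such that $r_{[x,y]}=r_yr_x-r_xr_y$, $l_{[x,y]}=r_yl_x-l_xr_y$, $l_{[x,y]}=r_yl_x+l_xl_y$ (products are compositions). For a subspace $A\subseteq L$, $r_A=\{r_a:a\in A\}$; $(r_A)^p$ is the span of all compositions $r_{a_1}\cdots r_{a_p}$, $a_i\in A$ ($(r_A)^0=F\,\mathrm{id}_V$); for subspaces $U,W$ of $\mathrm{End}_F(V)$, $UW$ (or $U\circ W$) is the span of all compositions $uw$; $(r_A)^p r_x^j$ is the span of $\{u\, r_x^j : u\in (r_A)^p\}$, $r_x^0=\mathrm{id}_V$; $+$ denotes sum of subspaces. $n_L(A)=\{y\in L:[y,a]\in A\text{ and }[a,y]\in A\ \forall a\in A\}$. *)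

(* Defs.v *)
From HB Require Import structures.
From mathcomp Require Import all_boot all_order all_algebra.
Set Implicit Arguments. Unset Strict Implicit. Unset Printing Implicit Defensive.
Import GRing.Theory.
Local Open Scope ring_scope.


Section Leibniz.
Variable F : fieldType.

Definition bilinear_br (L : vectType F) (br : L -> L -> L) :=
  (forall (a : F) (x y z : L), br (a *: x + y) z = a *: br x z + br y z) /\
  (forall (a : F) (x y z : L), br z (a *: x + y) = a *: br z x + br z y).

Definition leibniz_identity (L : vectType F) (br : L -> L -> L) :=
  forall x y z : L, br x (br y z) = br (br x y) z - br (br x z) y.

Definition leibniz_algebra (L : vectType F) (br : L -> L -> L) :=
  bilinear_br br /\ leibniz_identity br.

Definition linear_map (L W : vectType F) (f : L -> W) :=
  forall (a : F) (x y : L), f (a *: x + y) = a *: f x + f y.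

(* representation (l, r, V); products are compositions, (f \o g) v = f (g v) *)
Definition representation (L V : vectType F) (br : L -> L -> L)
    (l r : L -> 'End(V)) :=
  [/\ linear_map l, linear_map r,
      (forall x y, r (br x y) = (r y \o r x)%VF - (r x \o r y)%VF),
      (forall x y, l (br x y) = (r y \o l x)%VF - (l x \o r y)%VF) &
      (forall x y, l (br x y) = (r y \o l x)%VF + (l x \o l y)%VF)].

Definition idealiser (L : vectType F) (br : L -> L -> L) (A : {vspace L}) (y : L) :=
  forall a, a \in A -> br y a \in A /\ br a y \in A.

(* Subsets / subspaces of End(V) are represented as predicates *)
Definition spanE (V : vectType F) (S : 'End(V) -> Prop) : 'End(V) -> Prop :=
  fun f => exists s : seq 'End(V), (forall g, g \in s -> S g) /\ f \in <<s>>%VS.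

Definition rset (L V : vectType F) (r : L -> 'End(V)) (A : {vspace L})
  : 'End(V) -> Prop := fun f => exists2 a, a \in A & f = r a.

Fixpoint comps (V : vectType F) (S : 'End(V) -> Prop) (p : nat) : 'End(V) -> Prop :=
  match p with
  | 0 => fun f => f = \1%VF
  | p'.+1 => fun f => exists g h, S g /\ comps S p' h /\ f = (g \o h)%VF
  end.

Definition powsp (V : vectType F) (S : 'End(V) -> Prop) (p : nat) :=
  spanE (comps S p).

Definition prodsp (V : vectType F) (U W : 'End(V) -> Prop) :=
  spanE (fun f => exists u w, U u /\ W w /\ f = (u \o w)%VF).

Definition iterE (V : vectType F) (g : 'End(V)) (j : nat) : 'End(V) :=
  iter j (fun h => (g \o h)%VF) \1%VF.

Definition rmulsp (V : vectType F) (U : 'End(V) -> Prop) (g : 'End(V)) :=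
  spanE (fun f => exists2 u, U u & f = (u \o g)%VF).

Definition addsp (V : vectType F) (U W : 'End(V) -> Prop) : 'End(V) -> Prop :=
  fun f => exists u w, U u /\ W w /\ f = u + w.

Definition subsp (V : vectType F) (U W : 'End(V) -> Prop) :=
  forall f, U f -> W f.

Fixpoint sum_rmul (V : vectType F) (U : 'End(V) -> Prop) (g : 'End(V)) (k : nat)
  : 'End(V) -> Prop :=
  match k with
  | 0 => rmulsp U (iterE g 0)
  | k'.+1 => addsp (rmulsp U (iterE g k'.+1)) (sum_rmul U g k')
  end.

End Leibniz.

(* Main.v *)
Require Import Defs.
From HB Require Import structures.
From mathcomp Require Import all_boot all_order all_algebra.
Local Open Scope ring_scope.
Set Implicit Arguments. Unset Strict Implicit. Unset Printing Implicit Defensive.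
Import GRing.Theory.

Section Aux.
Variable F : fieldType.
Variable V : vectType F.
Implicit Types (C U W S : 'End(V) -> Prop).

Definition closedP C := C 0 /\ (forall (a : F) u v, C u -> C v -> C (a *: u + v)).

Lemma closedD C u v : closedP C -> C u -> C v -> C (u + v).
Proof. by move=> [_ H] Cu Cv; rewrite -(scale1r u); apply: H. Qed.

Lemma closedZ C (a : F) u : closedP C -> C u -> C (a *: u).
Proof. by move=> [H0 H] Cu; rewrite -(addr0 (a *: u)); apply: H. Qed.

Lemma closed_sum C (I : Type) (s : seq I) (P : pred I) (f : I -> 'End(V)) :
  closedP C -> (forall i, P i -> C (f i)) -> C (\sum_(i <- s | P i) f i).
Proof.
move=> hC Hf; apply: (big_ind C); first exact: hC.1.
  by move=> u v; apply: closedD.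
exact: Hf.
Qed.

Lemma span_closed C (s : seq 'End(V)) f :
  closedP C -> (forall g, g \in s -> C g) -> f \in <<s>>%VS -> C f.
Proof.
move=> hC; elim: s f => [|y s IH] f Hs.
  by rewrite span_nil memv0 => /eqP ->; exact: hC.1.
rewrite span_cons => /memv_addP [u /vlineP [k ->] [v vin ->]].
apply: hC.2; first by apply: Hs; rewrite mem_head.
apply: IH vin => g gs; apply: Hs; by rewrite in_cons gs orbT.
Qed.

Lemma spanE_closed S : closedP (spanE S).
Proof.
split; first by exists [::]; split => //; exact: mem0v.
move=> a u v [s1 [H1 m1]] [s2 [H2 m2]]; exists (s1 ++ s2); split.
  by move=> g; rewrite mem_cat => /orP [] ?; [apply: H1|apply: H2].
by rewrite span_cat; apply: memv_add => //; apply: memvZ.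
Qed.

Lemma spanE_in S f : S f -> spanE S f.
Proof. by move=> Sf; exists [:: f]; split; [move=> g; rewrite inE => /eqP ->|apply: memv_span; rewrite mem_head]. Qed.

Lemma addsp_closed U W : closedP U -> closedP W -> closedP (addsp U W).
Proof.
move=> hU hW; split; first by exists 0, 0; split; [exact: hU.1|split; [exact: hW.1|rewrite addr0]].
move=> a _ _ [u1 [w1 [U1 [W1 ->]]]] [u2 [w2 [U2 [W2 ->]]]].
exists (a *: u1 + u2), (a *: w1 + w2); split; first by apply: hU.2.
split; first by apply: hW.2.
by rewrite scalerDr addrACA.
Qed.

Lemma sum_rmul_closed U g k : closedP (sum_rmul U g k).
Proof.
elim: k => [|k IH] /=; first exact: spanE_closed.
by apply: addsp_closed => //; exact: spanE_closed.
Qed.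

Lemma sum_rmul_in U g k j f : (j <= k)%N -> rmulsp U (iterE g j) f -> sum_rmul U g k f.
Proof.
elim: k => [|k IH] /=.
  by rewrite leqn0 => /eqP ->.
rewrite leq_eqVlt => /orP [/eqP -> | ltj] Hf.
  exists f, 0; split => //; split; first exact: (sum_rmul_closed U g k).1.
  by rewrite addr0.
exists 0, f; split; first exact: (spanE_closed _).1.
by split; [apply: IH|rewrite add0r].
Qed.

Lemma closed_compr C w : closedP C -> closedP (fun f => C (f \o w)%VF).
Proof.
move=> hC; split; first by rewrite comp_lfun0l; exact: hC.1.
by move=> a u v Cu Cv; rewrite comp_lfunDl -comp_lfunZl; apply: hC.2.
Qed.

Lemma comps_r S p h g : comps S p h -> S g -> comps S p.+1 (h \o g)%VF.
Proof.
elim: p h => [|p IH] h /=.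
  by move=> -> Sg; exists g, \1%VF; rewrite comp_lfun1l comp_lfun1r.
move=> [g1 [h1 [Sg1 [ch1 ->]]]] Sg; exists g1, (h1 \o g)%VF; split => //.
by split; [apply: IH|rewrite comp_lfunA].
Qed.

Lemma iterE_S (g : 'End(V)) k : iterE g k.+1 = (iterE g k \o g)%VF.
Proof.
elim: k => [|k IH]; first by rewrite /iterE /= comp_lfun1l comp_lfun1r.
transitivity (g \o iterE g k.+1)%VF; first by []. by rewrite {1}IH comp_lfunA.
Qed.

End Aux.

Section Main.
Variable F : fieldType.
Variables (L V : vectType F) (br : L -> L -> L) (l r : L -> 'End(V)).
Hypothesis Hrep : representation br l r.
Variables (A : {vspace L}) (x : L).
Hypothesis Hx : idealiser br A x.

Let g := r x.

Lemma r0 : r 0 = 0.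
Proof.
case: Hrep => _ lin_r _ _ _.
have := lin_r 1 0 0; rewrite !scale1r addr0 => /(congr1 (fun t => t - r 0)).
by rewrite addrK subrr.
Qed.

Lemma rD u v : r (u + v) = r u + r v.
Proof. by case: Hrep => _ lin_r _ _ _; have := lin_r 1 u v; rewrite !scale1r. Qed.

Lemma compl_sum (I : Type) (s : seq I) (P : pred I) (G : I -> 'End(V)) (h : 'End(V)) :
  ((\sum_(i <- s | P i) G i) \o h)%VF = \sum_(i <- s | P i) (G i \o h)%VF.
Proof.
elim: s => [|i s IH]; first by rewrite !big_nil comp_lfun0l.
by rewrite !big_cons; case: (P i); rewrite ?comp_lfunDl IH.
Qed.

Lemma compr_sum (I : Type) (s : seq I) (P : pred I) (G : I -> 'End(V)) (h : 'End(V)) :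
  (h \o (\sum_(i <- s | P i) G i))%VF = \sum_(i <- s | P i) (h \o G i)%VF.
Proof.
elim: s => [|i s IH]; first by rewrite !big_nil comp_lfun0r.
by rewrite !big_cons; case: (P i); rewrite ?comp_lfunDr IH.
Qed.

Definition T k (f : 'End(V)) := exists c : nat -> L,
  (forall j, c j \in A) /\ f = \sum_(j < k.+1) (r (c j) \o iterE g j)%VF.

Lemma T_add k f1 f2 : T k f1 -> T k f2 -> T k (f1 + f2).
Proof.
move=> [c1 [H1 ->]] [c2 [H2 ->]]; exists (fun j => c1 j + c2 j); split.
  by move=> j; apply: memvD.
by rewrite -big_split; apply: eq_bigr => j _; rewrite rD comp_lfunDl.
Qed.

Lemma T_ext k f : T k f -> T k.+1 f.
Proof.
move=> [c [Hc ->]]; exists (fun j => if (j <= k)%N then c j else 0); split.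
  by move=> j; case: ifP => _; [apply: Hc|apply: mem0v].
rewrite [RHS]big_ord_recr /= ltnn r0 comp_lfun0l addr0.
by apply: eq_bigr => j _ /=; rewrite -ltnS ltn_ord.
Qed.

Lemma T_shift k f : T k f -> T k.+1 (f \o g)%VF.
Proof.
move=> [c [Hc ->]]; exists (fun j => if j is j'.+1 then c j' else 0); split.
  by move=> [|j]; [apply: mem0v|apply: Hc].
rewrite [RHS]big_ord_recl /= r0 comp_lfun0l add0r compl_sum.
by apply: eq_bigr => j _ /=; rewrite add0n -[(g \o _)%VF]/(iterE g j.+1) iterE_S comp_lfunA.
Qed.

Lemma claim k a : a \in A -> T k (iterE g k \o r a)%VF.
Proof.
elim: k a => [|k IH] a aA.
  exists (fun _ => a); split => // ; rewrite big_ord1 /iterE /=.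
  by rewrite comp_lfun1l comp_lfun1r.
have Hc : (g \o r a = r a \o g + r (br a x))%VF.
  by case: Hrep => _ _ Hr _ _; rewrite Hr addrC subrK.
rewrite iterE_S -comp_lfunA Hc comp_lfunDr comp_lfunA.
apply: T_add; first by apply: T_shift; apply: IH.
by apply: T_ext; apply: IH; case: (Hx aA).
Qed.

Lemma core p k h a : comps (rset r A) p h -> a \in A ->
  sum_rmul (powsp (rset r A) p.+1) g k ((h \o iterE g k) \o r a)%VF.
Proof.
move=> ch aA; have [c [Hc E]] := claim k aA.
rewrite -comp_lfunA E compr_sum.
apply: closed_sum; first exact: sum_rmul_closed.
move=> j _; rewrite comp_lfunA.
apply: (@sum_rmul_in _ _ _ _ _ j); first by rewrite -ltnS ltn_ord.
apply: spanE_in; exists (h \o r (c j))%VF => //.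
apply: spanE_in; apply: comps_r => //; by exists (c j).
Qed.

End Main.

Theorem lemma2p12 (F : closedFieldType) (charF0 : [pchar F] =i pred0)
  (L : vectType F) (br : L -> L -> L) (HL : leibniz_algebra br)
  (V : vectType F) (l r : L -> 'End(V)) (Hrep : representation br l r)
  (A : {vspace L}) (x : L) (Hx : idealiser br A x) :
  forall k p : nat,
    subsp (prodsp (rmulsp (powsp (rset r A) p) (iterE (r x) k)) (rset r A))
          (sum_rmul (powsp (rset r A) p.+1) (r x) k).
Proof.
move=> k p f [s [Hs fin]].
apply: (span_closed (sum_rmul_closed _ _ _) _ fin).
move=> w /Hs [u [w' [[s1 [Hs1 uin]] [[a aA ->] ->]]]].
apply: (span_closed (closed_compr (r a) (sum_rmul_closed _ _ _)) _ uin).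
move=> u1 /Hs1 [u' Hu' ->].
move: Hu' => [s2 [Hs2 u'in]].
apply: (span_closed (closed_compr (iterE (r x) k)
          (closed_compr (r a) (sum_rmul_closed _ _ _))) _ u'in).
move=> h /Hs2 ch /=.
exact: (core Hrep Hx).
Qed.
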